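(* Let $X$ and $Y$ be spaces. If $X$ is strongly $Y$-selective, then every subspace of $X$ is strongly $Y$-selective; if $X$ is $Y$-selective, then every closed subspace of $X$ is $Y$-selective.
   Context: All spaces are assumed $T_1$. For spaces $Y$, $X$, a map $\varphi:Y\to\mathcal P(X)\setminus\{\emptyset\}$ is lower semicontinuous (l.s.c.) if $\{y:\varphi(y)\cap U\neq\emptyset\}$ is open in $Y$ for every open $U\subseteq X$; a selection is a map $f:Y\to X$ with $f(y)\in\varphi(y)$ for all $y$. $X$ is strongly $Y$-selective if every l.s.c. map $Y\to\mathcal P(X)\setminus\{\emptyset\}$ has a continuous selection, and $Y$-selective if every l.s.c. map from $Y$ to the nonempty closed subsets of $X$ has a continuous selection. *)

(* Defs.v *)
From HB Require Import structures.
From mathcomp Require Import all_boot all_order all_algebra.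
From mathcomp Require Import all_classical all_reals all_analysis.
Set Implicit Arguments. Unset Strict Implicit. Unset Printing Implicit Defensive.
Local Open Scope classical_set_scope.

Definition lsc {Y X : topologicalType} (phi : Y -> set X) : Prop :=
  forall U : set X, open U -> open [set y | phi y `&` U !=set0].

Definition is_selection {Y X : Type} (phi : Y -> set X) (f : Y -> X) : Prop :=
  forall y, phi y (f y).

Definition strongly_selective (X Y : topologicalType) : Prop :=
  forall phi : Y -> set X, (forall y, phi y !=set0) -> lsc phi ->
    exists f : Y -> X, continuous f /\ is_selection phi f.

Definition selective (X Y : topologicalType) : Prop :=
  forall phi : Y -> set X, (forall y, phi y !=set0) ->
    (forall y, closed (phi y)) -> lsc phi ->
    exists f : Y -> X, continuous f /\ is_selection phi f.

(* Main.v *)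
Require Import Defs.
From HB Require Import structures.
From mathcomp Require Import all_boot all_order all_algebra.
From mathcomp Require Import all_classical all_reals all_analysis.
Local Open Scope classical_set_scope.

Section Aux.
Context (X Y : topologicalType) (A : set X).

Lemma aux_open (U : set X) : open U -> open (set_val @^-1` U : set (set_type A)).
Proof. by move=> oU; exists U. Qed.

Lemma aux_lsc (phi : Y -> set (set_type A)) :
  lsc phi -> lsc (fun y => set_val @` phi y).
Proof.
move=> lp U oU.
have := lp (set_val @^-1` U) (aux_open _ oU).
congr open; apply/seteqP; split => y /=.
- by move=> [a [pa Ua]]; exists (set_val a); split => //; exists a.
- by move=> [x [[a pa <-] Ux]]; exists a.
Qed.

Lemma aux_sel (phi : Y -> set (set_type A)) (f : Y -> X) :
  continuous f -> is_selection (fun y => set_val @` phi y) f ->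
  exists g : Y -> set_type A, continuous g /\ is_selection phi g.
Proof.
move=> cf sf.
have fA y : A (f y).
  by have [[a Aa] _ <-] := sf y; exact/set_mem.
pose g y : set_type A := @exist _ _ (f y) (mem_set (fA y)).
exists g; split.
- apply: (@continuous_comp_initial _ _ _ set_val g).
  exact: cf.
- move=> y; have [a pa ea] := sf y.
  suff -> : g y = a by [].
  by apply: val_inj; move: ea; rewrite set_valE /= => ->.
Qed.

End Aux.

Theorem mainTheorem8 (X Y : topologicalType)
  (hX : accessible_space X) (hY : accessible_space Y) :
  (strongly_selective X Y ->
     forall A : set X, strongly_selective (set_type A) Y) /\
  (selective X Y ->
     forall A : set X, closed A -> selective (set_type A) Y).
Proof.
split.
- move=> SS A phi ne lp.
  have ne' : forall y, (set_val @` phi y) !=set0.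
    by move=> y; have [a pa] := ne y; exists (set_val a); exists a.
  have [f [cf sf]] := SS (fun y => set_val @` phi y) ne' (@aux_lsc X Y A phi lp).
  exact: (@aux_sel X Y A phi f cf sf).
- move=> S A cA phi ne cl lp.
  have ne' : forall y, (set_val @` phi y) !=set0.
    by move=> y; have [a pa] := ne y; exists (set_val a); exists a.
  have cl' : forall y, closed (set_val @` phi y).
    move=> y.
    have [V oV eV] : open (~` phi y) := closed_openC (cl y).
    suff -> : set_val @` phi y = A `&` ~` V.
      by apply: closedI => //; exact: open_closedC.
    apply/seteqP; split => x /=.
    * move=> [a pa <-]; split.
        by case: a pa => a Aa _; exact/set_mem.
      move=> Va.
      have H : (set_val @^-1` V) a by exact: Va.
      by move: H; rewrite eV => /(_ pa).
    * move=> [Ax nVx]; exists (@exist _ _ x (mem_set Ax)); last by [].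
      apply: contrapT => npa.
      have H : (~` phi y) (@exist _ _ x (mem_set Ax)) by exact: npa.
      by move: H; rewrite -eV => /nVx.
  have [f [cf sf]] := S (fun y => set_val @` phi y) ne' cl' (@aux_lsc X Y A phi lp).
  exact: (@aux_sel X Y A phi f cf sf).
Qed.
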